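(* If $\mathcal{S}\in\mathrm{Rep}$, then every formal extended multi-segment in $[\mathcal{S}]$ is an extended multi-segment.
   Context: Formal extended segment: $([A,B]_\rho,\mu)$ with $\rho$ irreducible self-dual supercuspidal of some $\mathrm{GL}_d(F)$ ($F$ $p$-adic), $A-B\in\mathbb{Z}_{\ge0}$, $\mu\in\mathbb{Z}$, $\mu\equiv b\pmod2$ with $b=A-B+1$, $a=A+B+1$; extended segment if moreover $|\mu|\le b$. A formal extended multi-segment $\mathcal{S}$: a finite set $C_{\mathcal{S}}$ of such $\rho$ and sequences $(([A_i^\rho,B_i^\rho]_\rho,\mu_i^\rho))_{i=1}^{n_\rho}$ of formal extended segments with: $A_i^\rho>A_j^\rho$ and $B_i^\rho>B_j^\rho$ imply $i>j$; $A_i^\rho+B_i^\rho\ge0$; $\bigoplus_{\rho,i}\rho\boxtimes S_{a_i^\rho}\boxtimes S_{b_i^\rho}$ is an Arthur parameter of good parity for some $G_n$ ($G_n$ split $\mathrm{SO}_{2n+1}(F)$ or $\mathrm{Sp}_{2n}(F)$); $\sum_\rho\sum_i(\lfloor\mu_i^\rho/2\rfloor+\mu_i^\rho\sum_{j<i}(b_j^\rho-1))\equiv0\pmod2$. Extended multi-segment: all entries are extended segments. Admissible: for each $\rho$ with some $B_i^\rho<0$, $B_i^\rho>B_j^\rho\Rightarrow i>j$. Condition (N): $|A_i^\rho-A_{i-1}^\rho|+|B_i^\rho-B_{i-1}^\rho|\ge|\mu_i^\rho-\mu_{i-1}^\rho|$ for all $\rho$, $1<i\le n_\rho$. Reorder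 $R_i^\rho$ (changing only positions $i,i+1$ of the $\rho$-sequence): if $[A_i,B_i]\subseteq[A_{i+1},B_{i+1}]$, replace by $([A_{i+1},B_{i+1}]_\rho,2\mu_i-\mu_{i+1}),([A_i,B_i]_\rho,\mu_i)$; if $[A_i,B_i]\supseteq[A_{i+1},B_{i+1}]$, replace by $([A_{i+1},B_{i+1}]_\rho,\mu_{i+1}),([A_i,B_i]_\rho,2\mu_{i+1}-\mu_i)$; if $A_{i+1}\ge A_i$, $B_{i+1}\ge B_i$, do nothing. $[\mathcal{S}]$ is the equivalence class generated by these operations. $\mathrm{Rep}$: admissible extended multi-segments $\mathcal{S}$ such that every element of $[\mathcal{S}]$ satisfies (N), and $|\hat\mu_i^\rho|\le a_i^\rho$ for all $i,\rho$, where $\hat\mu_i^\rho=\mu_i^\rho$ if $B_i^\rho\in\mathbb{Z}$ and $\mu_i^\rho-1$ otherwise. *)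

(* Defs.v *)
From HB Require Import structures.
From mathcomp Require Import all_boot all_order all_algebra.
From Stdlib Require Import Relations.
Set Implicit Arguments. Unset Strict Implicit. Unset Printing Implicit Defensive.
Import Order.TTheory GRing.Theory Num.Theory.
Local Open Scope ring_scope.

(* A (formal) extended segment ([A,B]_rho, mu): A, B are half-integers
   (rationals), mu an integer. The label rho is stored in the multi-segment. *)
Record fseg := FSeg { sA : rat; sB : rat; smu : int }.

Definition fseg0 : fseg := FSeg 0 0 0.

Definition fseg_to (s : fseg) : rat * rat * int := (sA s, sB s, smu s).
Definition fseg_of (p : rat * rat * int) : fseg := FSeg p.1.1 p.1.2 p.2.
Lemma fseg_toK : cancel fseg_to fseg_of. Proof. by case. Qed.
HB.instance Definition _ := Equality.copy fseg (can_type fseg_toK).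

Definition sb (s : fseg) : rat := sA s - sB s + 1.
Definition sa (s : fseg) : rat := sA s + sB s + 1.
(* the same, as integers (exact under the formal-segment conditions) *)
Definition sbi (s : fseg) : int := Num.floor (sb s).
Definition sai (s : fseg) : int := Num.floor (sa s).
Definition sbn (s : fseg) : nat := `|sbi s|%N.
Definition san (s : fseg) : nat := `|sai s|%N.

Definition is_fseg (s : fseg) : Prop :=
  [/\ (2 * sB s) \is a Num.int, (sA s - sB s) \is a Num.int,
      0 <= sA s - sB s & (2 %| smu s - sbi s)%Z].

Definition is_eseg (s : fseg) : Prop :=
  is_fseg s /\ ((`|smu s|)%:~R <= sb s).

(* A multi-segment: a finite set C_S of rho's (a duplicate-free list) and,
   for each rho, a sequence of segments (values outside C_S are irrelevant). *)
Record mseg (Rho : Type) := MSeg { msC : seq Rho; msF : Rho -> seq fseg }.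

Section MSeg.
Variable Rho : eqType.
(* Abstract data of the self-dual supercuspidal rho of GL_d(F):
   dimr rho = d, orthr rho = true iff rho is of orthogonal type
   (false = symplectic type), detr rho = the (quadratic) determinant character
   of rho, in an abelian group Q written additively. *)
Variables (dimr : Rho -> nat) (orthr : Rho -> bool).
Variables (Q : zmodType) (detr : Rho -> Q).

(* rho (x) S_a (x) S_b is orthogonal iff sign(rho) * (-1)^(a-1) * (-1)^(b-1) = +1 *)
Definition summand_orth (r : Rho) (s : fseg) : bool :=
  orthr r == ~~ odd ((san s).-1 + (sbn s).-1).

Definition param_dim (S : mseg Rho) : nat :=
  (\sum_(r <- msC S) \sum_(s <- msF S r) dimr r * san s * sbn s)%N.

(* det (rho (x) S_a (x) S_b) = det(rho)^(a b) (det S_k = 1) *)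
Definition param_det (S : mseg Rho) : Q :=
  \sum_(r <- msC S) \sum_(s <- msF S r) detr r *+ (san s * sbn s).

(* psi = (+)_{rho,i} rho (x) S_{a_i} (x) S_{b_i} is an Arthur parameter of good
   parity for some G_n: either G_n = SO_{2n+1} (dual Sp_{2n}(C): all summands
   symplectic, dim 2n) or G_n = Sp_{2n} (dual SO_{2n+1}(C): all summands
   orthogonal, dim 2n+1, trivial determinant). *)
Definition arthur_good_parity (S : mseg Rho) : Prop :=
  exists n : nat,
    (param_dim S = n.*2 /\
     forall r, r \in msC S -> forall s, s \in msF S r -> ~~ summand_orth r s)
    \/
    [/\ param_dim S = n.*2.+1,
        (forall r, r \in msC S -> forall s, s \in msF S r -> summand_orth r s)
      & param_det S = 0].

Definition sign_sum (S : mseg Rho) : int :=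
  \sum_(r <- msC S) \sum_(i < size (msF S r))
     ((smu (nth fseg0 (msF S r) i) %/ 2)%Z
      + smu (nth fseg0 (msF S r) i) *
          \sum_(j < i) (sbi (nth fseg0 (msF S r) j) - 1)).

Definition is_fmseg (S : mseg Rho) : Prop :=
  [/\ uniq (msC S) /\
      (forall r, r \in msC S -> forall s, s \in msF S r -> is_fseg s),
      (forall r, r \in msC S -> forall i j : nat,
          (i < size (msF S r))%N -> (j < size (msF S r))%N ->
          sA (nth fseg0 (msF S r) j) < sA (nth fseg0 (msF S r) i) ->
          sB (nth fseg0 (msF S r) j) < sB (nth fseg0 (msF S r) i) ->
          (j < i)%N),
      (forall r, r \in msC S -> forall s, s \in msF S r -> 0 <= sA s + sB s),
      arthur_good_parity S
    & (2 %| sign_sum S)%Z].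

Definition is_emseg (S : mseg Rho) : Prop :=
  is_fmseg S /\ (forall r, r \in msC S -> forall s, s \in msF S r -> is_eseg s).

Definition admissible (S : mseg Rho) : Prop :=
  forall r, r \in msC S ->
    (exists2 s, s \in msF S r & sB s < 0) ->
    forall i j : nat, (i < size (msF S r))%N -> (j < size (msF S r))%N ->
      sB (nth fseg0 (msF S r) j) < sB (nth fseg0 (msF S r) i) -> (j < i)%N.

(* condition (N) (0-indexed: positions i-1, i with 0 < i < n) *)
Definition condN (S : mseg Rho) : Prop :=
  forall r, r \in msC S -> forall i : nat, (0 < i < size (msF S r))%N ->
    let x := nth fseg0 (msF S r) i.-1 in
    let y := nth fseg0 (msF S r) i in
    (`|smu y - smu x|)%:~R <= `|sA y - sA x| + `|sB y - sB x|.

Definition muhat (s : fseg) : int :=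
  if sB s \is a Num.int then smu s else smu s - 1.

(* the operation R_i on a single rho-sequence (0-indexed positions i, i+1) *)
Definition reorder_seq (i : nat) (l : seq fseg) : seq fseg :=
  let x := nth fseg0 l i in
  let y := nth fseg0 l i.+1 in
  if (sB y <= sB x) && (sA x <= sA y) then
    set_nth fseg0 (set_nth fseg0 l i (FSeg (sA y) (sB y) (2 * smu x - smu y)))
            i.+1 x
  else if (sB x <= sB y) && (sA y <= sA x) then
    set_nth fseg0 (set_nth fseg0 l i y)
            i.+1 (FSeg (sA x) (sB x) (2 * smu y - smu x))
  else l.

Definition reorder_step (S S' : mseg Rho) : Prop :=
  exists2 r, r \in msC S &
  exists2 i : nat, (i.+1 < size (msF S r))%N &
    S' = MSeg (msC S)
              (fun r' => if r' == r then reorder_seq i (msF S r) else msF S r').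

Definition equivS : relation (mseg Rho) := clos_refl_sym_trans _ reorder_step.

Definition inRep (S : mseg Rho) : Prop :=
  [/\ admissible S, is_emseg S,
      (forall S', equivS S S' -> condN S')
    & forall r, r \in msC S -> forall s, s \in msF S r ->
        (`|muhat s|)%:~R <= sa s].

End MSeg.

(* Main.v *)
Require Import Defs.
From mathcomp Require Import all_boot all_order all_algebra.
From Stdlib Require Import Relations.
From mathcomp Require Import lra.
Import Order.TTheory GRing.Theory Num.Theory.

Section Aux.
Local Open Scope ring_scope.

Lemma ar_sub (ax bx ay by_ u v : rat) : by_ <= bx -> ax <= ay ->
  `|u| <= ax - bx + 1 -> `|v - u| <= `|ay-ax| + `|by_-bx| ->
  `|2*u - v| <= ay - by_ + 1 /\ `|v| <= ay - by_ + 1.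
Proof.
move=> h1 h2; rewrite (ger0_norm (_ : 0 <= ay - ax)) ?subr_ge0 //.
rewrite (ler0_norm (_ : by_ - bx <= 0)) ?subr_le0 //.
rewrite !ler_norml => /andP[? ?] /andP[? ?]; split; apply/andP; split; lra.
Qed.

Lemma ar_sup (ax bx ay by_ u v : rat) : bx <= by_ -> ay <= ax ->
  `|v| <= ay - by_ + 1 -> `|v - u| <= `|ay-ax| + `|by_-bx| ->
  `|2*v - u| <= ax - bx + 1 /\ `|u| <= ax - bx + 1.
Proof.
move=> h1 h2; rewrite (ler0_norm (_ : ay - ax <= 0)) ?subr_le0 //.
rewrite (ger0_norm (_ : 0 <= by_ - bx)) ?subr_ge0 //.
rewrite !ler_norml => /andP[? ?] /andP[? ?]; split; apply/andP; split; lra.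
Qed.

Arguments ar_sub {ax bx ay by_ u v}.
Arguments ar_sup {ax bx ay by_ u v}.

Definition bseg (s : fseg) : Prop := (`|smu s|)%:~R <= sb s.
Definition Pl (l : seq fseg) : Prop :=
  forall k, (k < size l)%N -> bseg (nth fseg0 l k).
Definition cN (l : seq fseg) (i : nat) : Prop :=
  let x := nth fseg0 l i in let y := nth fseg0 l i.+1 in
  (`|smu y - smu x|)%:~R <= `|sA y - sA x| + `|sB y - sB x|.

Lemma cast2 (m n : int) : (2 * m - n)%:~R = 2 * (m%:~R : rat) - n%:~R.
Proof. by rewrite rmorphB rmorphM. Qed.

Lemma nth_set2 (l : seq fseg) i a b k :
  nth fseg0 (set_nth fseg0 (set_nth fseg0 l i a) i.+1 b) k =
  if k == i.+1 then b else if k == i then a else nth fseg0 l k.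
Proof. by rewrite nth_set_nth /= nth_set_nth. Qed.

Lemma reorder_both l i : (i.+1 < size l)%N -> cN l i ->
  (Pl l <-> Pl (reorder_seq i l)).
Proof.
move=> hi; rewrite /cN /reorder_seq.
set x := nth fseg0 l i; set y := nth fseg0 l i.+1 => hc.
have hs : forall a b, size (set_nth fseg0 (set_nth fseg0 l i a) i.+1 b) = size l.
  by move=> a b; rewrite !size_set_nth (maxn_idPr (ltnW hi)) (maxn_idPr hi).
have hii : (i == i.+1) = false by elim: i {hi x y hc hs}.
have Bx : bseg x <-> `|(smu x)%:~R : rat| <= sA x - sB x + 1.
  by rewrite /bseg /sb intr_norm.
have By : bseg y <-> `|(smu y)%:~R : rat| <= sA y - sB y + 1.
  by rewrite /bseg /sb intr_norm.
move: hc; rewrite intr_norm rmorphB /= => hc.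
case: ifP => [/andP[h1 h2]|_].
  split=> H k; rewrite ?hs => hk.
    rewrite nth_set2.
    have [_|n1] := eqVneq k i.+1; first exact: H i (ltnW hi).
    have [_|n2] := eqVneq k i; last exact: H.
    rewrite /bseg /sb /= intr_norm cast2.
    have /Bx hb := H i (ltnW hi).
    by case: (ar_sub h1 h2 hb hc).
  have := H i.+1; rewrite hs nth_set2 eqxx => /(_ hi) Hx.
  have [->|n1] := eqVneq k i.+1.
    apply/By; move/Bx: Hx => Hx.
    by case: (ar_sub h1 h2 Hx hc).
  have [->|n2] := eqVneq k i; first exact: Hx.
  by have := H k; rewrite hs nth_set2 (negPf n1) (negPf n2); apply.
case: ifP => [/andP[h1 h2]|_]; last done.
split=> H k; rewrite ?hs => hk.
  rewrite nth_set2.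
  have [_|n1] := eqVneq k i.+1.
    rewrite /bseg /sb /= intr_norm cast2.
    have /By hb := H i.+1 hi.
    by case: (ar_sup h1 h2 hb hc).
  have [_|n2] := eqVneq k i; last exact: H.
  exact: H i.+1 hi.
have := H i; rewrite hs nth_set2 eqxx hii => /(_ (ltnW hi)) Hy.
have [->|n1] := eqVneq k i.+1; first exact: Hy.
have [->|n2] := eqVneq k i.
  apply/Bx; move/By: Hy => Hy.
  by case: (ar_sup h1 h2 Hy hc).
by have := H k; rewrite hs nth_set2 (negPf n1) (negPf n2); apply.
Qed.

End Aux.
Arguments reorder_both {l i}.

Theorem proposition3p4 (Rho : eqType) (dimr : Rho -> nat) (orthr : Rho -> bool)
    (Q : zmodType) (detr : Rho -> Q) (S : mseg Rho) :
  (forall r, (0 < dimr r)%N) ->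
  inRep dimr orthr detr S ->
  forall S' : mseg Rho, equivS S S' ->
    is_fmseg dimr orthr detr S' -> is_emseg dimr orthr detr S'.
Proof.
move=> _ [adm [fS bS] hN hmu] S' hSS' fS'.
have bnd : forall T, equivS S T -> forall r, r \in msC T -> Pl (msF T r).
  move=> T HT; have {HT} H := @clos_rst_rstn1 _ _ _ _ HT.
  elim: H => [|y z st Hyn IH].
    by move=> r rin k hk; have [] := bS r rin _ (mem_nth fseg0 hk).
  have Ey : equivS S y := @clos_rstn1_rst _ _ _ _ Hyn.
  have Ez : equivS S z.
    apply: rst_trans Ey _; case: st => st; first exact: rst_step.
    by apply: rst_sym; apply: rst_step.
  case: st => [[r0 r0in [i hi Ez']]|[r0 r0in [i hi Ey']]].
    have hc : cN (msF y r0) i := hN y Ey r0 r0in i.+1 hi.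
    move: Ez; rewrite Ez' => Ez r' /= r'in.
    case: eqP => [_|_]; last exact: IH.
    have HH := (proj1 (reorder_both hi hc) (IH r0 r0in)). exact HH.
  have hc : cN (msF z r0) i := hN z Ez r0 r0in i.+1 hi.
  move: IH; rewrite Ey' /= => IH r' r'in.
  have := IH r' r'in; case: eqP => [->|//].
  by move=> /(proj2 (reorder_both hi hc)).
split=> // r rin s sin; split.
  by have [[_ H] _ _ _ _] := fS'; apply: H sin.
have /(nthP fseg0) [k hk <-] := sin.
exact: bnd S' hSS' r rin k hk.
Qed.
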